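(* Let $\alpha>0$ and $k\ge 2$ be an integer. Then $$\sum_{\sigma\in\mathfrak S_k}\det\Big[\Gamma(1+\sigma(i)\alpha)\,\Gamma(j+\sigma(i)\alpha)\prod_{r=1}^{i-1}(r+\sigma(i)\alpha)\Big]_{1\le i,j\le k}=\alpha^{k(k-1)}\Big(\prod_{j=1}^k (j-1)!\,\Gamma(1+\alpha j)\Big)^2.$$
   Context: $\mathfrak S_k$ is the symmetric group on $\{1,\dots,k\}$; in the matrix, $i$ is the row index and $j$ the column index, and empty products equal $1$. *)

(* Defs.v *)
From HB Require Import structures.
From Stdlib Require Import Reals Lra Classical ClassicalEpsilon
  FunctionalExtensionality PropExtensionality.
From mathcomp Require Import all_boot all_order all_algebra all_fingroup.

Set Implicit Arguments.
Unset Strict Implicit.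
Unset Printing Implicit Defensive.

Local Open Scope R_scope.

Definition Req_bool (x y : R) : bool := if Req_EM_T x y then true else false.

Lemma Req_boolP : Equality.axiom Req_bool.
Proof. by move=> x y; rewrite /Req_bool; case: Req_EM_T => h; constructor. Qed.

HB.instance Definition _ := hasDecEq.Build R Req_boolP.

Definition R_find (P : pred R) (n : nat) : option R :=
  match excluded_middle_informative (exists x, P x) with
  | left h => Some (proj1_sig (constructive_indefinite_description _ h))
  | right _ => None
  end.

Lemma R_find_correct (P : pred R) n x : R_find P n = Some x -> P x.
Proof.
rewrite /R_find; case: excluded_middle_informative => // h [<-].
exact: proj2_sig (constructive_indefinite_description _ h).
Qed.

Lemma R_find_complete (P : pred R) : (exists x, P x) -> exists n, R_find P n.
Proof.
move=> h; exists 0%N; rewrite /R_find; case: excluded_middle_informative => //.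
Qed.

Lemma R_find_ext (P Q : pred R) : P =1 Q -> R_find P =1 R_find Q.
Proof.
move=> PQ; have -> : P = Q by apply: functional_extensionality.
by [].
Qed.

HB.instance Definition _ :=
  hasChoice.Build R R_find_correct R_find_complete R_find_ext.

Lemma R_addA : ssrfun.associative Rplus. Proof. by move=> x y z; rewrite Rplus_assoc. Qed.
Lemma R_addC : ssrfun.commutative Rplus. Proof. exact: Rplus_comm. Qed.
Lemma R_add0 : ssrfun.left_id 0 Rplus. Proof. exact: Rplus_0_l. Qed.
Lemma R_addN : ssrfun.left_inverse 0 Ropp Rplus.
Proof. by move=> x; rewrite Rplus_comm Rplus_opp_r. Qed.

HB.instance Definition _ := GRing.isZmodule.Build R R_addA R_addC R_add0 R_addN.

Lemma R_mulA : ssrfun.associative Rmult. Proof. by move=> x y z; rewrite Rmult_assoc. Qed.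
Lemma R_mulC : ssrfun.commutative Rmult. Proof. exact: Rmult_comm. Qed.
Lemma R_mul1 : ssrfun.left_id 1 Rmult. Proof. exact: Rmult_1_l. Qed.
Lemma R_mulDl : ssrfun.left_distributive Rmult Rplus.
Proof. by move=> x y z; rewrite Rmult_plus_distr_r. Qed.
Lemma R_one_neq0 : (1 : R) != 0.
Proof. by apply/eqP; exact: R1_neq_R0. Qed.

HB.instance Definition _ :=
  GRing.Zmodule_isComNzRing.Build R R_mulA R_mulC R_mul1 R_mulDl R_one_neq0.

Definition R_inv (x : R) : R := if Req_bool x 0 then 0 else Rinv x.

Lemma R_mulVf (x : R) : x != 0 -> Rmult (R_inv x) x = 1.
Proof.
move=> /eqP hx; rewrite /R_inv; case: Req_boolP => // _.
exact: Rinv_l.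
Qed.

Lemma R_inv0 : R_inv 0 = 0.
Proof. by rewrite /R_inv; case: Req_boolP. Qed.

HB.instance Definition _ := GRing.ComNzRing_isField.Build R R_mulVf R_inv0.

(* ---------- Euler's Gamma function (Gauss's limit formula) ----------
   Gamma x = lim_{n -> oo} n! n^x / (x (x+1) ... (x+n)),
   valid for every real x that is not a non-positive integer (in
   particular for all x > 0, which is the only range used below). *)

Fixpoint rising_prod (x : R) (n : nat) : R :=
  match n with
  | O => x
  | S m => Rmult (rising_prod x m) (Rplus x (INR (S m)))
  end.

Definition gauss_seq (x : R) (n : nat) : R :=
  Rdiv (Rmult (INR (Factorial.fact n)) (Rpower (INR n) x)) (rising_prod x n).

Definition Gamma (x : R) : R :=
  epsilon (inhabits 0) (fun l => Un_cv (gauss_seq x) l).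
Arguments Gamma x%ring_scope.

(* Main.v *)
Require Import Defs.
From HB Require Import structures.
From Stdlib Require Import Reals Lra Lia ZArith Classical ClassicalEpsilon.
From mathcomp Require Import all_boot all_order all_algebra all_fingroup.
Local Open Scope R_scope.

Lemma rpS x n : rising_prod x (S n) = rising_prod x n * (x + INR (S n)).
Proof. by []. Qed.

Lemma INR_Spos n : 0 < INR (S n).
Proof. have := pos_INR n; rewrite S_INR; lra. Qed.

Lemma rp_pos x n : 0 < x -> 0 < rising_prod x n.
Proof.
move=> hx; elim: n => [|n IH] //; rewrite rpS.
apply: Rmult_lt_0_compat => //; have := INR_Spos n; lra.
Qed.

Lemma rp_shift x n : x * rising_prod (x+1) n = rising_prod x (S n).
Proof.
elim: n => [|n IH]; first by rewrite /= ; ring.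
rewrite rpS [rising_prod x (S (S n))]rpS -IH !S_INR; ring.
Qed.

Lemma gauss_shift x n : 0 < x ->
  gauss_seq (x+1) (S n) = gauss_seq x (S n) * (x * INR (S n) / (x + INR (S n) + 1)).
Proof.
move=> hx; rewrite /gauss_seq.
rewrite Rpower_plus Rpower_1; last exact: INR_Spos.
have h1 := rp_pos x (S n) hx. have h2 := INR_Spos n.
have h4 := rp_shift x (S n).
have -> : rising_prod (x + 1) (S n) = rising_prod x (S n) * (x + INR (S (S n))) / x.
  rewrite -rpS -h4; field; lra.
have h6 := pos_INR n.
rewrite !S_INR.
field; repeat split; try lra.
Qed.

Lemma exp_convex x e : 0 <= x <= 1 -> exp (x*e) <= 1 + x*(exp e - 1).
Proof.
move=> hx.
have E1 : exp e = exp (x*e) * exp ((1-x)*e) by rewrite -exp_plus; f_equal; ring.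
have E2 : 1 = exp (x*e) * exp (-(x*e)) by rewrite -exp_plus -exp_0; f_equal; ring.
have H1 := exp_ineq1_le ((1-x)*e). have H2 := exp_ineq1_le (-(x*e)).
have P := exp_pos (x*e).
set E := exp (x*e) in E1 E2 P *.
have H1' : E * (1 + (1-x)*e) <= exp e.
  rewrite E1; apply: Rmult_le_compat_l; lra.
have H2' : E * (1 + -(x*e)) <= 1.
  rewrite [X in _ <= X]E2; apply: Rmult_le_compat_l; lra.
nra.
Qed.

Lemma grow_ineq N x : 1 <= N -> 0 <= x ->
  (x+N+1)*exp(x*ln N) <= (N+1)*exp(x*ln(N+1)).
Proof.
move=> hN hx.
set d := ln (N+1) - ln N.
have -> : x * ln (N+1) = x * ln N + x * d by rewrite /d; ring.
rewrite exp_plus.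
have Hd : 1 <= d * (N+1).
  have H := exp_ineq1_le (-d).
  have : exp (-d) = N / (N+1).
    rewrite /d (_ : - (ln (N+1) - ln N) = ln N + - ln (N+1)); last ring.
    rewrite exp_plus exp_Ropp !exp_ln; lra.
  move=> e; rewrite e in H.
  have : (N+1) * (1 + - d) <= (N+1) * (N / (N+1)) by apply: Rmult_le_compat_l; lra.
  have -> : (N+1) * (N / (N+1)) = N by field; lra.
  lra.
have H := exp_ineq1_le (x*d).
have A := exp_pos (x * ln N).
have : x + N + 1 <= (N+1) * exp (x*d) by nra.
nra.
Qed.

Lemma dec_ineq N x : 1 <= N -> 0 <= x <= 1 ->
  (N+1)*exp(x*ln(N+2)) <= (x+N+1)*exp(x*ln(N+1)).
Proof.
move=> hN hx.
set e := ln (N+2) - ln (N+1).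
have -> : x * ln (N+2) = x * ln (N+1) + x * e by rewrite /e; ring.
rewrite exp_plus.
have Ee : exp e = (N+2)/(N+1).
  rewrite /e (_ : ln (N+2) - ln (N+1) = ln (N+2) + - ln (N+1)); last ring.
  rewrite exp_plus exp_Ropp !exp_ln; lra.
have H := exp_convex x e hx. rewrite Ee in H.
have A := exp_pos (x * ln (N+1)).
have : (N+1) * exp (x*e) <= x + N + 1.
  have -> : x + N + 1 = (N+1) * (1 + x * ((N+2)/(N+1) - 1)) by field; lra.
  apply: Rmult_le_compat_l; lra.
nra.
Qed.

Lemma frac_le1 F P c A B : 0 < F -> 0 < P -> 0 < c -> c*A <= B -> F*A/P <= F*B/(P*c).
Proof.
move=> hF hP hc h.
have e : F*B/(P*c) - F*A/P = F/(P*c) * (B - c*A) by field; lra.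
have : 0 <= F/(P*c) * (B - c*A).
  apply: Rmult_le_pos; last lra.
  apply: Rlt_le; apply: Rdiv_lt_0_compat => //; exact: Rmult_lt_0_compat.
lra.
Qed.

Lemma frac_le2 F P c A B : 0 < F -> 0 < P -> 0 < c -> B <= c*A -> F*B/(P*c) <= F*A/P.
Proof.
move=> hF hP hc h.
have e : F*A/P - F*B/(P*c) = F/(P*c) * (c*A - B) by field; lra.
have : 0 <= F/(P*c) * (c*A - B).
  apply: Rmult_le_pos; last lra.
  apply: Rlt_le; apply: Rdiv_lt_0_compat => //; exact: Rmult_lt_0_compat.
lra.
Qed.

Lemma INR_fact_pos n : 0 < INR (Factorial.fact n).
Proof. apply: lt_0_INR; exact: Factorial.lt_O_fact. Qed.

Lemma factS_INR n : INR (Factorial.fact (S n)) = INR (S n) * INR (Factorial.fact n).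
Proof. by rewrite fact_simpl mult_INR. Qed.

Definition vseq x m := INR (Factorial.fact (S m)) * exp (x * ln (INR (S m) + 1)) / rising_prod x (S m).

Lemma base_cv x : 0 < x <= 1 -> exists l, Un_cv (gauss_seq x) l.
Proof.
move=> hx.
pose u m := gauss_seq x (S m).
have uE m : u m = INR (Factorial.fact (S m)) * exp (x * ln (INR (S m))) / rising_prod x (S m) by [].
have hN m : 1 <= INR (S m) by rewrite S_INR; have := pos_INR m; lra.
have grow : Un_growing u.
  move=> m; rewrite !uE (factS_INR (S m)) (rpS x (S m)) (S_INR (S m)).
  set N := INR (S m). set F := INR (Factorial.fact (S m)). set P := rising_prod x (S m).
  have hF : 0 < F by apply: INR_fact_pos.
  have hP : 0 < P by apply: rp_pos; lra.
  have hNm := hN m; rewrite -/N in hNm.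
  have -> : (N + 1) * F * exp (x * ln (N + 1)) / (P * (x + (N + 1))) =
            F * ((N + 1) * exp (x * ln (N + 1))) / (P * (x + (N + 1))) by field; lra.
  apply: frac_le1 => //; first lra.
  have := @grow_ineq N x hNm; rewrite -Rplus_assoc; apply; lra.
pose v m := INR (Factorial.fact (S m)) * exp (x * ln (INR (S m) + 1)) / rising_prod x (S m).
have uv m : u m <= v m.
  rewrite uE /v.
  have hF : 0 < INR (Factorial.fact (S m)) by apply: INR_fact_pos.
  have hP : 0 < rising_prod x (S m) by apply: rp_pos; lra.
  rewrite /Rdiv; apply: Rmult_le_compat_r; first by apply: Rlt_le; apply: Rinv_0_lt_compat.
  apply: Rmult_le_compat_l; first lra.
  apply: Rlt_le; apply: exp_increasing; apply: Rmult_lt_compat_l; first lra.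
  apply: ln_increasing; have := hN m; lra.
have vdec m : v (S m) <= v m.
  rewrite /v (factS_INR (S m)) (rpS x (S m)) (S_INR (S m)).
  set N := INR (S m). set F := INR (Factorial.fact (S m)). set P := rising_prod x (S m).
  have hF : 0 < F by apply: INR_fact_pos.
  have hP : 0 < P by apply: rp_pos; lra.
  have hNm := hN m; rewrite -/N in hNm.
  have -> : (N + 1) * F * exp (x * ln (N + 1 + 1)) / (P * (x + (N + 1))) =
            F * ((N + 1) * exp (x * ln (N + 2))) / (P * (x + (N + 1))).
    rewrite (_ : N + 1 + 1 = N + 2); [field; lra | ring].
  apply: frac_le2 => //; first lra.
  have := @dec_ineq N x hNm; rewrite -Rplus_assoc; apply; lra.
have vb m : v m <= v O.
  elim: m => [|m IH]; first lra.
  have := vdec m; lra.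
have [l hl] : { l | Un_cv u l }.
  apply: growing_cv => //.
  exists (v O) => r [m ->]; have := uv m; have := vb m; lra.
exists l => eps he; have [N hN'] := hl eps he.
exists (S N) => n hn; case: n hn => [|n] hn; first lia.
apply: hN'; lia.
Qed.

Lemma ratio_cv x : 0 < x -> Un_cv (fun n => x * INR n / (x + INR n + 1)) x.
Proof.
move=> hx eps he.
have hc : 0 < x * (x+1) by nra.
have [N [hN hN0]] := archimed_cor1 (eps / (x*(x+1))) (Rdiv_lt_0_compat _ _ he hc).
exists N => n hn.
have hn' : INR N <= INR n by apply: le_INR.
have hNp : 0 < INR N by apply: lt_0_INR.
rewrite /Rdist.
have -> : x * INR n / (x + INR n + 1) - x = - (x*(x+1) / (x + INR n + 1)) by field; lra.
rewrite Rabs_Ropp Rabs_right; last by apply: Rle_ge; apply: Rlt_le; apply: Rdiv_lt_0_compat; lra.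
have h1 : x*(x+1) / (x + INR n + 1) <= x*(x+1) / INR N.
  rewrite /Rdiv; apply: Rmult_le_compat_l; first lra.
  apply: Rinv_le_contravar; lra.
have h2 : x*(x+1) / INR N < eps.
  have : / INR N * (x*(x+1)) < eps / (x*(x+1)) * (x*(x+1)) by apply: Rmult_lt_compat_r.
  have -> : eps / (x*(x+1)) * (x*(x+1)) = eps by field; lra.
  rewrite /Rdiv Rmult_comm; lra.
lra.
Qed.

Lemma gauss_cv_succ x l : 0 < x -> Un_cv (gauss_seq x) l -> Un_cv (gauss_seq (x+1)) (l * x).
Proof.
move=> hx hl.
have h := CV_mult _ _ _ _ hl (ratio_cv x hx).
move=> eps he; have [N hN] := h eps he.
exists (S N) => n hn; case: n hn => [|n] hn; first lia.
rewrite gauss_shift //; apply: hN; lia.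
Qed.

Lemma gauss_cv x : 0 < x -> exists l, Un_cv (gauss_seq x) l.
Proof.
move=> hx.
have [m hm] : exists m : nat, x <= INR m + 1.
  have [hz1 hz2] := archimed x.
  exists (Z.to_nat (up x)).
  have hz: Z.le Z0 (up x).
    apply: le_IZR; rewrite /=; lra.
  rewrite INR_IZR_INZ Z2Nat.id //.
  lra.
elim: m x hx hm => [|m IH] x hx hm.
  by apply: base_cv; rewrite /= in hm; lra.
have [hle|hgt] := Rle_or_lt x 1; first by apply: base_cv; lra.
have [l hl] : exists l, Un_cv (gauss_seq (x - 1)) l by apply: IH; rewrite S_INR in hm; lra.
exists (l * (x-1)); have := @gauss_cv_succ (x-1) l; rewrite (_ : x - 1 + 1 = x); last ring.
apply; [lra | exact hl].
Qed.

Lemma Gamma_spec x : 0 < x -> Un_cv (gauss_seq x) (Gamma x).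
Proof.
move=> hx; rewrite /Gamma.
apply: (epsilon_spec (inhabits 0) (fun l => Un_cv (gauss_seq x) l)).
exact: gauss_cv x hx.
Qed.

Lemma Gamma_succ x : 0 < x -> Gamma (x + 1) = x * Gamma x.
Proof.
move=> hx.
have h1 := Gamma_spec (x+1) ltac:(lra).
have h2 := gauss_cv_succ x (Gamma x) hx (Gamma_spec x hx).
rewrite Rmult_comm; exact: UL_sequence h1 h2.
Qed.

Local Close Scope R_scope.
From mathcomp Require Import ring zify.
Import GRing.Theory.
Local Open Scope ring_scope.

Lemma natR n : (n%:R : R) = INR n.
Proof.
elim: n => [|n IH]; first by [].
rewrite mulrS IH S_INR addrC; reflexivity.
Qed.

Lemma pos_natRy (n : nat) (y : R) : Rlt 0 y -> Rlt 0 (n%:R + y).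
Proof. move=> hy; rewrite natR; have := pos_INR n; change (n%:R + y) with (Rplus (n%:R) y); lra. Qed.

Lemma Gamma_prod (y : R) j : Rlt 0 y ->
  Gamma (j.+1%:R + y) = Gamma (1 + y) * \prod_(r < j) (r.+1%:R + y).
Proof.
move=> hy; elim: j => [|j IH]; first by rewrite big_ord0 mulr1.
rewrite big_ord_recr /= mulrA -IH.
have -> : j.+2%:R + y = (j.+1%:R + y) + 1 by rewrite mulrS; ring.
rewrite [LHS]Gamma_succ; first by rewrite mulrC.
exact: pos_natRy.
Qed.

Definition yv (alpha : R) (m : nat) : R := m.+1%:R * alpha.
Definition Pp (z : R) (j : nat) : R := \prod_(r < j) (r.+1%:R + z).
Definition Vm k alpha : 'M[R]_k := \matrix_(m < k, j < k) Pp (yv alpha m) j.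
Definition Qp (j : nat) : {poly R} := \prod_(r < j) ('X - (- (r.+1)%:R)%:P).

Lemma size_Qp j : size (Qp j) = j.+1.
Proof. by rewrite /Qp size_prod_XsubC -[index_enum _]enumT -cardE card_ord. Qed.

Lemma Qp_monic j : Qp j \is monic.
Proof. exact: monic_prod_XsubC. Qed.

Lemma hornerQp j x : (Qp j).[x] = Pp x j.
Proof.
rewrite /Qp /Pp horner_prod; apply: eq_bigr => r _.
by rewrite hornerXsubC opprK addrC.
Qed.

Lemma detV k alpha : \det (Vm k alpha) =
  \prod_(i < k) \prod_(j < k | (i < j)%N) (yv alpha j - yv alpha i).
Proof.
pose a : 'rV[R]_k := \row_m yv alpha m.
pose U : 'M[R]_k := \matrix_(i, j) (Qp j)`_i.
have -> : Vm k alpha = (Vandermonde k a)^T *m U.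
  apply/matrixP => m j; rewrite !mxE.
  rewrite -hornerQp (@horner_coef_wide _ k); last by rewrite size_Qp.
  apply: eq_bigr => i _; rewrite !mxE mulrC.
  done.
rewrite det_mulmx det_tr det_Vandermonde.
have -> : \det U = 1.
  rewrite -det_tr det_trig.
    apply: big1 => i _; rewrite !mxE.
    have := Qp_monic i; rewrite qualifE /= lead_coefE size_Qp /=.
    by move/eqP.
  apply/is_trig_mxP => i j hij; rewrite !mxE nth_default // size_Qp.
  done.
rewrite mulr1; apply: eq_bigr => i _; apply: eq_bigr => j _; by rewrite !mxE.
Qed.

Lemma fact_rev j : \prod_(i < j) (j - i)%:R = j`!%:R :> R.
Proof.
rewrite -natr_prod; congr (_%:R).
elim: j => [|j IH]; first by rewrite big_ord0.
rewrite big_ord_recl subn0 factS; congr (_ * _)%N.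
by rewrite -IH; apply: eq_bigr => i _; rewrite /bump /= subSS.
Qed.

Lemma Dprod k alpha :
  \prod_(i < k) \prod_(j < k | (i < j)%N) (yv alpha j - yv alpha i) =
  \prod_(j < k) (alpha ^+ j * j`!%:R).
Proof.
under eq_bigr => i _ do rewrite big_mkcond /=.
rewrite exchange_big /=.
apply: eq_bigr => j _.
rewrite -big_mkcond /=.
rewrite -(big_ord_widen _ (fun i => yv alpha j - yv alpha i)); last exact: ltnW.
under eq_bigr => i _ do rewrite /yv -mulrBl -natrB ?ltnS 1?ltnW //.
rewrite big_split /= prodr_const card_ord mulrC; congr (_ * _).
under eq_bigr => i _ do rewrite subSS.
exact: fact_rev.
Qed.


Lemma alpha_pow k (a : R) : (\prod_(j < k) a ^+ j) ^+ 2 = a ^+ (k * (k - 1)).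
Proof.
elim: k => [|k IH]; first by rewrite big_ord0 expr1n.
rewrite big_ord_recr /= exprMn IH -exprM -exprD; congr (_ ^+ _).
case: k {IH} => [|k] //=; rewrite !subn1 /=; nia.
Qed.

Theorem mainTheorem6 (alpha : R) (k : nat) (halpha : Rlt R0 alpha) (hk : (2 <= k)%N) :
  \sum_(s : 'S_k)
     \det (\matrix_(i < k, j < k)
             (Gamma (1 + (s i).+1%:R * alpha)
              * Gamma (j.+1%:R + (s i).+1%:R * alpha)
              * \prod_(r < i) (r.+1%:R + (s i).+1%:R * alpha)))
  = alpha ^+ (k * (k - 1))
    * (\prod_(j < k) ((j`!)%:R * Gamma (1 + alpha * j.+1%:R))) ^+ 2.
Proof.
have ypos m : Rlt 0 (yv alpha m).
  rewrite /yv natR; apply: Rmult_lt_0_compat => //; exact: INR_Spos.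
set dV := \det (Vm k alpha).
set G2 := \prod_(i < k) Gamma (1 + yv alpha i) ^+ 2.
have step (s : 'S_k) : \det (\matrix_(i < k, j < k)
             (Gamma (1 + (s i).+1%:R * alpha)
              * Gamma (j.+1%:R + (s i).+1%:R * alpha)
              * \prod_(r < i) (r.+1%:R + (s i).+1%:R * alpha)))
    = G2 * dV * ((-1) ^+ s * \prod_i (Vm k alpha)^T i (s i)).
  pose c : 'rV[R]_k := \row_i (Gamma (1 + yv alpha (s i)) ^+ 2 * Pp (yv alpha (s i)) i).
  have -> : \matrix_(i < k, j < k)
             (Gamma (1 + (s i).+1%:R * alpha)
              * Gamma (j.+1%:R + (s i).+1%:R * alpha)
              * \prod_(r < i) (r.+1%:R + (s i).+1%:R * alpha))
         = diag_mx c *m row_perm s (Vm k alpha).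
    apply/matrixP => i j; rewrite mul_diag_mx !mxE.
    have := Gamma_prod (yv alpha (s i)) j (ypos (s i)); rewrite /yv => ->.
    rewrite /Pp expr2; ring.
  rewrite det_mulmx det_diag row_permE det_mulmx det_perm -/dV.
  rewrite (eq_bigr (fun i => Gamma (1 + yv alpha (s i)) ^+ 2 * Pp (yv alpha (s i)) i)); last by move=> i _; rewrite mxE.
  rewrite big_split /=.
  rewrite /G2 [X in X * dV * _](reindex_inj (@perm_inj _ s)) /=.
  have -> : \prod_i (Vm k alpha)^T i (s i) = \prod_i Pp (yv alpha (s i)) i.
    by apply: eq_bigr => i _; rewrite !mxE.
  set A := \prod_(i < k) Gamma (1 + yv alpha (s i)) ^+ 2.
  set B := \prod_(i < k) Pp (yv alpha (s i)) i.
  set e := (-1) ^+ s.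
  by rewrite mulrC !mulrA [_ * A]mulrC -!mulrA; congr (_ * _); rewrite mulrCA.
under eq_bigr => s _ do rewrite step.
rewrite -mulr_sumr.
rewrite -[\sum_s _]/(\det (Vm k alpha)^T) det_tr -/dV.
rewrite /dV detV Dprod /G2.
rewrite -mulrA -expr2 [\prod_(j < k) (alpha ^+ j * _)]big_split /= exprMn alpha_pow.
rewrite [\prod_(j < k) (_%:R * Gamma _)]big_split /= exprMn prodrXl.
have -> : \prod_(i < k) Gamma (1 + alpha * i.+1%:R) = \prod_(i < k) Gamma (1 + yv alpha i).
  by apply: eq_bigr => i _; rewrite /yv mulrC.
rewrite mulrCA; congr (_ * _); exact: mulrC.
Qed.
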